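(* Let $\mathbb{F}$ be an algebraically closed field with $\mathrm{Char}(\mathbb{F})\ne2$, and let $y,z\in\mathbb{F}$ be nonzero with $y\neq1$, $y\neq-1$, $z\neq1$, $yz\neq1$, $(y+1)z\neq2$. Then the pair $A=\begin{pmatrix}0&z&0\\1&0&1-z\\0&1&0\end{pmatrix}$, $A^*=\begin{pmatrix}0&yz&0\\1&0&yz-1\\0&-1&0\end{pmatrix}$ is a Leonard pair in $\mathrm{Mat}_3(\mathbb{F})$, and it has a parameter array with $\theta_0=1,\theta_1=0,\theta_2=-1$, $\theta^*_0=1,\theta^*_1=0,\theta^*_2=-1$, $\varphi_1=\varphi_2=(y+1)z-2$, $\phi_1=\phi_2=(y+1)z$.
   Context: A Leonard pair in $\mathrm{Mat}_{d+1}(\mathbb{F})$ is a pair of matrices $A,A^*$ such that there is a basis of $\mathbb{F}^{d+1}$ in which $A$ is irreducible tridiagonal (tridiagonal with all sub/superdiagonal entries nonzero) and $A^*$ diagonal, and a basis in which $A^*$ is irreducible tridiagonal and $A$ diagonal. A Leonard system is $(A,\{E_i\}_{i=0}^d,A^*,\{E^*_i\}_{i=0}^d)$ where $A,A^*$ each have $d+1$ distinct eigenvalues, $\{E_i\},\{E^*_i\}$ are orderings of their primitive idempotents, and $E_iA^*E_j,E^*_iAE^*_j$ are $0$ for $|i-j|>1$ and nonzero for $|i-j|=1$. Eigenvalue sequences: $AE_i=\theta_iE_i$, $A^*E^*_i=\theta^*_iE^*_i$. First split sequence: for nonzero $v\in E^*_0V$, $u_i=(A-\theta_{i-1}I)\cdots(A-\theta_0I)v$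 form a basis in which $A^*$ is upper bidiagonal with diagonal $\theta^*_0,\dots,\theta^*_d$ and superdiagonal $\varphi_1,\dots,\varphi_d$. Second split sequence $\{\phi_i\}$: first split sequence of $(A,\{E_{d-i}\},A^*,\{E^*_i\})$. Parameter array $(\{\theta_i\},\{\theta^*_i\},\{\varphi_i\},\{\phi_i\})$; a parameter array of a Leonard pair is that of any associated Leonard system. *)

(* Defs.v *)
From mathcomp Require Import all_boot all_order all_algebra.
Set Implicit Arguments. Unset Strict Implicit. Unset Printing Implicit Defensive.
Import GRing.Theory.
Local Open Scope ring_scope.

Section Leonard.
Variables (F : fieldType) (d : nat).
Local Notation n := d.+1.

Definition far (i j : nat) : bool := (i.+1 < j)%N || (j.+1 < i)%N.
Definition adj (i j : nat) : bool := (i.+1 == j) || (j.+1 == i).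

Definition irr_tridiag (M : 'M[F]_n) : Prop :=
  forall i j : 'I_n, (far i j -> M i j = 0) /\ (adj i j -> M i j != 0).

Definition leonard_pair (A As : 'M[F]_n) : Prop :=
  (exists P : 'M[F]_n, P \in unitmx /\
     irr_tridiag (invmx P *m A *m P) /\ is_diag_mx (invmx P *m As *m P)) /\
  (exists Q : 'M[F]_n, Q \in unitmx /\
     irr_tridiag (invmx Q *m As *m Q) /\ is_diag_mx (invmx Q *m A *m Q)).

Definition prim_idem_seq (A : 'M[F]_n) (th : 'I_n -> F) (E : 'I_n -> 'M[F]_n) : Prop :=
  [/\ injective th,
      forall i, eigenvalue A (th i),
      forall i, A *m E i = th i *: E i,
      forall i j, E i *m E j = (if i == j then E i else 0)
    & \sum_i E i = 1%:M].

Definition leonard_system (A : 'M[F]_n) (E : 'I_n -> 'M[F]_n)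
    (As : 'M[F]_n) (Es : 'I_n -> 'M[F]_n) (th ths : 'I_n -> F) : Prop :=
  [/\ prim_idem_seq A th E, prim_idem_seq As ths Es,
      forall i j : 'I_n, (far i j -> E i *m As *m E j = 0) /\
                         (adj i j -> E i *m As *m E j != 0)
    & forall i j : 'I_n, (far i j -> Es i *m A *m Es j = 0) /\
                         (adj i j -> Es i *m A *m Es j != 0)].

(* upper bidiagonal matrix with diagonal ths and superdiagonal phi_1..phi_d
   (phi at index 0 is unused) *)
Definition bidiag (ths phi : 'I_n -> F) : 'M[F]_n :=
  \matrix_(i, j) (if i == j then ths i
                  else if (i.+1 == j)%N then phi j else 0).

Definition split_basis (A : 'M[F]_n) (th : 'I_n -> F) (v : 'cV[F]_n) : 'M[F]_n :=
  \matrix_(i, j) ((\prod_(k < n | (k < j)%N) (A - (th k)%:M)) *m v) i 0.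

Definition first_split_seq (A : 'M[F]_n) (th : 'I_n -> F) (As : 'M[F]_n)
    (ths : 'I_n -> F) (Es : 'I_n -> 'M[F]_n) (phi : 'I_n -> F) : Prop :=
  forall v : 'cV[F]_n, v != 0 -> Es ord0 *m v = v ->
    split_basis A th v \in unitmx /\
    As *m split_basis A th v = split_basis A th v *m bidiag ths phi.

(* The second split sequence is the first split sequence of
   (A, {E_{d-i}}, As, {Es_i}), whose eigenvalue sequence is th_{d-i}. *)
Definition parameter_array (A As : 'M[F]_n) (th ths phi phis : 'I_n -> F) : Prop :=
  exists (E Es : 'I_n -> 'M[F]_n),
    [/\ leonard_system A E As Es th ths,
        first_split_seq A th As ths Es phi
      & first_split_seq A (fun i => th (rev_ord i)) As ths Es phis].

End Leonard.

Definition mx3 (F : fieldType) (a00 a01 a02 a10 a11 a12 a20 a21 a22 : F) : 'M[F]_3 :=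
  \matrix_(i < 3, j < 3)
    nth 0 (nth [::] [:: [:: a00; a01; a02]; [:: a10; a11; a12]; [:: a20; a21; a22]] i) j.

(* Main.v *)
Require Import Defs.
From mathcomp Require Import all_boot all_order all_algebra all_field.
From mathcomp Require Import ring.
Import GRing.Theory.
Local Open Scope ring_scope.

Ltac expand := repeat progress (rewrite ?mxE ?big_ord_recr ?big_ord0 /=).
Ltac mxcase := apply/matrixP;
  case => [[|[|[|?]]] ?] //; case => [[|[|[|?]]] ?] //.

Section S.
Variable F : closedFieldType.

Lemma mx3_eta (M : 'M[F]_3) : M = mx3 (M 0 0) (M 0 1) (M 0 2) (M 1 0) (M 1 1) (M 1 2) (M 2 0) (M 2 1) (M 2 2).
Proof.
apply/matrixP => i j; rewrite mxE.
case: i => [[|[|[|?]]] Hi] //; case: j => [[|[|[|?]]] Hj] //=; congr (M _ _); exact: val_inj.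
Qed.

Lemma det3 (M : 'M[F]_3) : \det M =
  M 0 0 * (M 1 1 * M 2 2 - M 1 2 * M 2 1)
  - M 0 1 * (M 1 0 * M 2 2 - M 1 2 * M 2 0)
  + M 0 2 * (M 1 0 * M 2 1 - M 1 1 * M 2 0).
Proof.
rewrite [in LHS](mx3_eta M).
rewrite (expand_det_row _ ord0) !big_ord_recr big_ord0 /= /cofactor.
rewrite !(expand_det_row _ ord0) !big_ord_recr !big_ord0 /= /cofactor.
rewrite !det_mx11 !mxE /=. ring.
Qed.

Lemma inv_eq {P Pi : 'M[F]_3} : Pi *m P = 1%:M -> P \in unitmx /\ invmx P = Pi.
Proof.
move=> h; have h' := mulmx1C h.
have uP : P \in unitmx by case: (mulmx1_unit h').
split => //; by rewrite -[invmx P]mulmx1 -h' mulmxA mulVmx // mul1mx.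
Qed.

Lemma neq0_eq (a b : F) : a = b -> b != 0 -> a != 0.
Proof. by move=> ->. Qed.

Variables y z : F.
Hypothesis H2 : (2%:R : F) != 0.
Hypothesis Hp : (y + 1) * z - 2%:R != 0.
Hypothesis Hq : (y + 1) * z != 0.

Definition A := mx3 0 z 0  1 0 (1 - z)  0 1 0.
Definition As := mx3 0 (y * z) 0  1 0 (y * z - 1)  0 (-1) 0.
Notation w := (y * z).
Definition P := mx3 w (1-w) w  1 0 (-1)  (-1) 1 (-1).
Definition Pi := mx3 (1/2%:R) (1/2%:R) ((w-1)/2%:R)  1 0 w  (1/2%:R) (-1/2%:R) ((w-1)/2%:R).
Definition Q := mx3 z (1-z) z  1 0 (-1)  1 (-1) 1.
Definition Qi := mx3 (1/2%:R) (1/2%:R) ((1-z)/2%:R)  1 0 (-z)  (1/2%:R) (-1/2%:R) ((1-z)/2%:R).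

Lemma PiP : Pi *m P = 1%:M.
Proof. rewrite /Pi /P; mxcase; expand; by field. Qed.
Lemma QiQ : Qi *m Q = 1%:M.
Proof. rewrite /Qi /Q; mxcase; expand; by field. Qed.

Lemma LP : leonard_pair A As.
Proof.
split.
- exists P; have [uP ->] := inv_eq PiP; split => //; split.
  + move=> i j; rewrite /Pi /P /A; case: i => [[|[|[|?]]] ?] //; case: j => [[|[|[|?]]] ?] //;
    split => //= _; expand; try by field.
    * apply: (@neq0_eq _ (- ((y+1)*z - 2%:R) / 2%:R)); [by field | by rewrite mulf_neq0 ?invr_eq0 ?oppr_eq0].
    * apply: (@neq0_eq _ ((y+1)*z)); [by field | by []].
    * apply: (@neq0_eq _ (- ((y+1)*z))); [by field | by rewrite oppr_eq0].
    * apply: (@neq0_eq _ (((y+1)*z - 2%:R) / 2%:R)); [by field | by rewrite mulf_neq0 ?invr_eq0].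
  + apply/is_diag_mxP; rewrite /Pi /P /As => i j;
    case: i => [[|[|[|?]]] ?] //; case: j => [[|[|[|?]]] ?] //= _; expand; by field.
- exists Q; have [uQ ->] := inv_eq QiQ; split => //; split.
  + move=> i j; rewrite /Qi /Q /As; case: i => [[|[|[|?]]] ?] //; case: j => [[|[|[|?]]] ?] //;
    split => //= _; expand; try by field.
    * apply: (@neq0_eq _ (- ((y+1)*z - 2%:R) / 2%:R)); [by field | by rewrite mulf_neq0 ?invr_eq0 ?oppr_eq0].
    * apply: (@neq0_eq _ ((y+1)*z)); [by field | by []].
    * apply: (@neq0_eq _ (- ((y+1)*z))); [by field | by rewrite oppr_eq0].
    * apply: (@neq0_eq _ (((y+1)*z - 2%:R) / 2%:R)); [by field | by rewrite mulf_neq0 ?invr_eq0].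
  + apply/is_diag_mxP; rewrite /Qi /Q /A => i j;
    case: i => [[|[|[|?]]] ?] //; case: j => [[|[|[|?]]] ?] //= _; expand; by field.
Qed.

Definition th (i : 'I_3) : F := [:: 1; 0; -1]`_i.
Definition E (i : 'I_3) : 'M[F]_3 := nth 0
  [:: mx3 (z/2%:R) (z/2%:R) (z*(1-z)/2%:R) (1/2%:R) (1/2%:R) ((1-z)/2%:R) (1/2%:R) (1/2%:R) ((1-z)/2%:R);
      mx3 (1-z) 0 (-z*(1-z)) 0 0 0 (-1) 0 z;
      mx3 (z/2%:R) (-z/2%:R) (z*(1-z)/2%:R) (-1/2%:R) (1/2%:R) (-(1-z)/2%:R) (1/2%:R) (-1/2%:R) ((1-z)/2%:R)] i.
Definition Es (i : 'I_3) : 'M[F]_3 := nth 0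
  [:: mx3 (w/2%:R) (w/2%:R) (w*(w-1)/2%:R) (1/2%:R) (1/2%:R) ((w-1)/2%:R) (-1/2%:R) (-1/2%:R) ((1-w)/2%:R);
      mx3 (1-w) 0 (-w*(w-1)) 0 0 0 1 0 w;
      mx3 (w/2%:R) (-w/2%:R) (w*(w-1)/2%:R) (-1/2%:R) (1/2%:R) (-(w-1)/2%:R) (-1/2%:R) (1/2%:R) ((1-w)/2%:R)] i.

Lemma th_inj : injective th.
Proof.
have h10 : (1:F) != -1 by rewrite -subr_eq0 opprK.
have h01 : (0:F) != -1 by rewrite eq_sym oppr_eq0 oner_eq0.
move=> i j; case: i => [[|[|[|?]]] ?] //; case: j => [[|[|[|?]]] ?] //= H;
  try (apply: val_inj; done); exfalso; move: H; apply/eqP;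
  by rewrite ?oner_eq0 // 1?eq_sym ?oner_eq0.
Qed.

Lemma idemA : prim_idem_seq A th E.
Proof.
split.
- exact: th_inj.
- case => [[|[|[|?]]] ?] //=; apply/eigenvalueP;
  [exists (\row_j [:: 1; 1; 1-z]`_j) | exists (\row_j [:: 1; 0; -z]`_j) | exists (\row_j [:: 1; -1; 1-z]`_j)];
  first [ (apply/negP => /eqP /matrixP /(_ 0 0); rewrite !mxE /=; apply/eqP; exact: oner_neq0)
        | (rewrite /A /th; apply/matrixP; case => [[|?] ?] //; case => [[|[|[|?]]] ?] //; expand; by field) ].
- rewrite /A /th /E; case => [[|[|[|?]]] ?] //=; mxcase; expand; by field.
- rewrite /E; case => [[|[|[|?]]] ?] //; case => [[|[|[|?]]] ?] //=; mxcase; expand; by field.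
- rewrite /E !big_ord_recr big_ord0 /=; mxcase; expand; by field.
Qed.

Lemma idemAs : prim_idem_seq As th Es.
Proof.
split.
- exact: th_inj.
- case => [[|[|[|?]]] ?] //=; apply/eigenvalueP;
  [exists (\row_j [:: 1; 1; w-1]`_j) | exists (\row_j [:: 1; 0; w]`_j) | exists (\row_j [:: 1; -1; w-1]`_j)];
  first [ (apply/negP => /eqP /matrixP /(_ 0 0); rewrite !mxE /=; apply/eqP; exact: oner_neq0)
        | (rewrite /As /th; apply/matrixP; case => [[|?] ?] //; case => [[|[|[|?]]] ?] //; expand; by field) ].
- rewrite /As /th /Es; case => [[|[|[|?]]] ?] //=; mxcase; expand; by field.
- rewrite /Es; case => [[|[|[|?]]] ?] //; case => [[|[|[|?]]] ?] //=; mxcase; expand; by field.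
- rewrite /Es !big_ord_recr big_ord0 /=; mxcase; expand; by field.
Qed.

Definition o0 : 'I_3 := ord0.
Definition o1 : 'I_3 := Ordinal (isT : (1 < 3)%N).
Definition o2 : 'I_3 := Ordinal (isT : (2 < 3)%N).

Ltac nz i0 j0 bb := apply/negP => /eqP /matrixP /(_ i0 j0); rewrite /o0 /o1 /o2; expand;
   move=> /eqP; apply/negP; apply: (@neq0_eq _ bb); [by field | ].

Lemma sysE : forall i j : 'I_3, (far i j -> E i *m As *m E j = 0) /\
                         (adj i j -> E i *m As *m E j != 0).
Proof.
rewrite /E /As; case => [[|[|[|?]]] ?] //; case => [[|[|[|?]]] ?] //; split => //= _.
- nz o1 o0 (- ((y+1)*z - 2%:R) / 2%:R); by rewrite mulf_neq0 ?invr_eq0 ?oppr_eq0.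
- mxcase; expand; by field.
- nz o2 o0 (- ((y+1)*z) / 2%:R); by rewrite mulf_neq0 ?invr_eq0 ?oppr_eq0.
- nz o2 o0 (((y+1)*z) / 2%:R); by rewrite mulf_neq0 ?invr_eq0 ?oppr_eq0.
- mxcase; expand; by field.
- nz o1 o0 (- ((y+1)*z - 2%:R) / 2%:R); by rewrite mulf_neq0 ?invr_eq0 ?oppr_eq0.
Qed.

Lemma sysEs : forall i j : 'I_3, (far i j -> Es i *m A *m Es j = 0) /\
                         (adj i j -> Es i *m A *m Es j != 0).
Proof.
rewrite /Es /A; case => [[|[|[|?]]] ?] //; case => [[|[|[|?]]] ?] //; split => //= _.
- nz o1 o0 (- ((y+1)*z - 2%:R) / 2%:R); by rewrite mulf_neq0 ?invr_eq0 ?oppr_eq0.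
- mxcase; expand; by field.
- nz o2 o0 (((y+1)*z) / 2%:R); by rewrite mulf_neq0 ?invr_eq0 ?oppr_eq0.
- nz o2 o0 (- ((y+1)*z) / 2%:R); by rewrite mulf_neq0 ?invr_eq0 ?oppr_eq0.
- mxcase; expand; by field.
- nz o1 o0 (- ((y+1)*z - 2%:R) / 2%:R); by rewrite mulf_neq0 ?invr_eq0 ?oppr_eq0.
Qed.
End S.
Section S2.
Variable F : closedFieldType.
Variables y z : F.
Hypothesis H2 : (2%:R : F) != 0.
Hypothesis Hp : (y + 1) * z - 2%:R != 0.
Hypothesis Hq : (y + 1) * z != 0.

Lemma col3_eta (v : 'cV[F]_3) : v = \col_i [:: v o0 0; v o1 0; v o2 0]`_i.
Proof.
apply/matrixP; case => [[|[|[|?]]] ?] //; case => [[|?] ?] //; rewrite mxE /=;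
congr (v _ _); exact: val_inj.
Qed.

Lemma split_pre (v : 'cV[F]_3) : v != 0 -> Es F y z o0 *m v = v ->
  exists2 b, b != 0 & v = \col_i [:: y * z * b; b; - b]`_i.
Proof.
rewrite (col3_eta v); move: (v o0 0) (v o1 0) (v o2 0) => a b c hv hE.
have hA : As F y z *m Es F y z o0 = Es F y z o0.
  rewrite /As /Es /o0; mxcase; expand; by field.
have hE' : As F y z *m \col_i [:: a; b; c]`_i = \col_i [:: a; b; c]`_i.
  by rewrite -{1}hE mulmxA hA.
have /matrixP e := hE'.
have e0 := e o0 ord0; have e2 := e o2 ord0.
move: e0 e2; rewrite /As /o0 /o2; expand => e0 e2.
have ha : a = y * z * b by rewrite -e0; ring.
have hc : c = - b by rewrite -e2; ring.
exists b; last by rewrite ha hc.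
apply: contraNneq hv => hb0; apply/eqP/matrixP; case => [[|[|[|?]]] ?] //; case => [[|?] ?] //;
  rewrite ha hc hb0; expand; ring.
Qed.

Lemma det3' (M : 'M[F]_3) : \det M =
  M o0 o0 * (M o1 o1 * M o2 o2 - M o1 o2 * M o2 o1)
  - M o0 o1 * (M o1 o0 * M o2 o2 - M o1 o2 * M o2 o0)
  + M o0 o2 * (M o1 o0 * M o2 o1 - M o1 o1 * M o2 o0).
Proof.
have -> : M = mx3 (M o0 o0) (M o0 o1) (M o0 o2) (M o1 o0) (M o1 o1) (M o1 o2) (M o2 o0) (M o2 o1) (M o2 o2).
  apply/matrixP => i j; rewrite mxE.
  case: i => [[|[|[|?]]] Hi] //; case: j => [[|[|[|?]]] Hj] //=; congr (M _ _); exact: val_inj.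
rewrite (expand_det_row _ ord0) !big_ord_recr big_ord0 /= /cofactor.
rewrite !(expand_det_row _ ord0) !big_ord_recr !big_ord0 /= /cofactor.
rewrite !det_mx11 !mxE /=. ring.
Qed.

Lemma split_basisE (M : 'M[F]_3) t v : split_basis M t v =
  \matrix_(i, j) (nth 0 [:: v; (M - (t o0)%:M) *m v; (M - (t o0)%:M) *m (M - (t o1)%:M) *m v] j) i 0.
Proof.
have e0 : (widen_ord (leqnSn 2) (widen_ord (leqnSn 1) ord_max) : 'I_3) = o0 by apply: val_inj.
have e1 : (widen_ord (leqnSn 2) ord_max : 'I_3) = o1 by apply: val_inj.
apply/matrixP => i j; rewrite [LHS]mxE [RHS]mxE; case: j => [[|[|[|?]]] ?] //=;
 rewrite big_mkcond !big_ord_recr big_ord0 /= ?mul1r ?mulr1 -?mulmxE ?mul1mx ?e0 ?e1 //.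
Qed.

Lemma split1 : first_split_seq (A F z) (th F) (As F y z) (th F) (Es F y z) (fun _ => (y + 1) * z - 2%:R).
Proof.
move=> v hv hE; have [b hb ->] := split_pre _ hv hE.
rewrite split_basisE /A /th /o0 /o1 /o2.
split.
- rewrite unitmxE det3' unitfE /o0 /o1 /o2; expand.
  apply: (@neq0_eq _ _ (b^+3 * ((y+1)*z - 2%:R) * ((y+1)*z)^+2)); first by ring.
  by apply: mulf_neq0; [apply: mulf_neq0; [exact: expf_neq0 | exact: Hp] | exact: expf_neq0].
- rewrite /bidiag /As; mxcase; do 7 (rewrite ?mxE ?big_ord_recr ?big_ord0 /=); ring.
Qed.

Lemma split2 : first_split_seq (A F z) (fun i => th F (rev_ord i)) (As F y z) (th F) (Es F y z) (fun _ => (y + 1) * z).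
Proof.
move=> v hv hE; have [b hb ->] := split_pre _ hv hE.
rewrite split_basisE /A /th /o0 /o1 /o2.
split.
- rewrite unitmxE det3' unitfE /o0 /o1 /o2; expand.
  apply: (@neq0_eq _ _ (b^+3 * ((y+1)*z - 2%:R) * ((y+1)*z)^+2)); first by ring.
  by apply: mulf_neq0; [apply: mulf_neq0; [exact: expf_neq0 | exact: Hp] | exact: expf_neq0].
- rewrite /bidiag /As; mxcase; do 7 (rewrite ?mxE ?big_ord_recr ?big_ord0 /=); ring.
Qed.
End S2.

Theorem proposition4p4 (F : closedFieldType) (y z : F) :
  ~~ (2%N \in [pchar F]) ->
  y != 0 -> z != 0 -> y != 1 -> y != -1 -> z != 1 -> y * z != 1 ->
  (y + 1) * z != 2%:R ->
  leonard_pair (mx3 0 z 0  1 0 (1 - z)  0 1 0)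
               (mx3 0 (y * z) 0  1 0 (y * z - 1)  0 (-1) 0) /\
  parameter_array (mx3 0 z 0  1 0 (1 - z)  0 1 0)
                  (mx3 0 (y * z) 0  1 0 (y * z - 1)  0 (-1) 0)
                  (fun i : 'I_3 => [:: 1; 0; -1]`_i)
                  (fun i : 'I_3 => [:: 1; 0; -1]`_i)
                  (fun _ : 'I_3 => (y + 1) * z - 2%:R)
                  (fun _ : 'I_3 => (y + 1) * z).
Proof.
move=> h2 hy hz hy1 hym1 hz1 hyz hp.
have H2 : (2%:R : F) != 0 by move: h2; rewrite inE /=.
have Hp : (y + 1) * z - 2%:R != 0 by rewrite subr_eq0.
have Hq : (y + 1) * z != 0 by rewrite mulf_neq0 // addr_eq0.
split; first by apply: LP.
exists (E F z), (Es F y z); split.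
- split; [exact: idemA | exact: idemAs | apply: sysE => // | apply: sysEs => //].
- exact: split1.
- exact: split2.
Qed.
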